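(* Let $\pi$ and $\sigma$ be Knuth equivalent permutations of $[N]$ and let $I$ be a Dyck pattern interval of $\pi$. Then $I$ is also a Dyck pattern interval of $\sigma$. Furthermore, if $\pi\xrightarrow{I}\pi'$ and $\sigma\xrightarrow{I}\sigma'$ are the corresponding edges labeled $I$ in the crystal skeletons, then $\pi'$ and $\sigma'$ are Knuth equivalent.
   Context: Two words are Knuth equivalent if one can be obtained from the other by a sequence of the elementary relations $acb\equiv cab$ for $a\le b<c$ and $bac\equiv bca$ for $a<b\le c$ applied to adjacent letters. For a permutation $\pi$ of $[N]$ and an interval $I=[i,i+2m]\subseteq[N]$ with $m\ge1$, let $\pi|_I$ be the subword of letters in $I$; $I$ is a Dyck pattern interval of $\pi$ if the RSK insertion tableau $P(\pi|_I)$ has bottom row $i,\dots,i+m$ and top row $i+m+1,\dots,i+2m$ (French notation). The edge labeled $I$ out of $\pi$ goes to $\pi'=\mathsf{std}(f_i(w))$, where $w$ is obtained from $\pi$ by replacing the letters $i,\dots,i+m$ by $i$ and $i+m+1,\dots,i+2m$ by $i+1$; here $f_i$ is the crystal operator on words (in the subword of letters $i,i+1$, bracket each $i+1$ with an unbracketed $i$ to its right, parenthesis-style; $f_i$ changes the rightmost unbracketed $i$ into $i+1$), and $\mathsf{std}$ replaces the $a_j$ occurrences of each letter $j$, left to right, by $a_1+\dots+a_{j-1}+1,\dots,a_1+\dots+a_j$. *)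

(* Defs.v *)
From mathcomp Require Import all_boot.
From Stdlib Require Import Relations.
Set Implicit Arguments. Unset Strict Implicit. Unset Printing Implicit Defensive.

Definition knuth_step (u v : seq nat) : Prop :=
  exists (x y : seq nat) (a b c : nat),
    (a <= b < c /\ u = x ++ [:: a; c; b] ++ y /\ v = x ++ [:: c; a; b] ++ y) \/
    (a < b <= c /\ u = x ++ [:: b; a; c] ++ y /\ v = x ++ [:: b; c; a] ++ y).

Definition knuth_equiv : seq nat -> seq nat -> Prop :=
  clos_refl_sym_trans (seq nat) knuth_step.

Definition is_perm (N : nat) (w : seq nat) : bool := perm_eq w (iota 1 N).

Fixpoint row_bump (r : seq nat) (x : nat) : option nat * seq nat :=
  match r with
  | [::] => (None, [:: x])
  | y :: r' => if x < y then (Some y, x :: r')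
               else let: (b, r'') := row_bump r' x in (b, y :: r'')
  end.

Fixpoint tab_insert (t : seq (seq nat)) (x : nat) : seq (seq nat) :=
  match t with
  | [::] => [:: [:: x]]
  | r :: t' => let: (b, r') := row_bump r x in
               match b with
               | None => r' :: t'
               | Some y => r' :: tab_insert t' y
               end
  end.

(* insertion tableau P(w), rows listed from the bottom row up *)
Definition RSK_P (w : seq nat) : seq (seq nat) := foldl tab_insert [::] w.

Definition in_interval (i m x : nat) : bool := (i <= x) && (x <= i + 2 * m).

Definition restrict (pi : seq nat) (i m : nat) : seq nat :=
  filter (in_interval i m) pi.

Definition dyck_interval (N : nat) (pi : seq nat) (i m : nat) : Prop :=
  [/\ 0 < m, 1 <= i, i + 2 * m <= N &
      RSK_P (restrict pi i m) = [:: iota i m.+1; iota (i + m).+1 m]].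

(* scan marking the unbracketed letters i (each i+1 is bracketed with an
   unbracketed i to its right, parenthesis-style) *)
Fixpoint unbr_scan (i : nat) (w : seq nat) (open : nat) : seq bool :=
  match w with
  | [::] => [::]
  | x :: w' =>
      if x == i.+1 then false :: unbr_scan i w' open.+1
      else if x == i then
        match open with
        | n.+1 => false :: unbr_scan i w' n
        | 0 => true :: unbr_scan i w' 0
        end
      else false :: unbr_scan i w' open
  end.

(* f_i w: change the rightmost unbracketed i into i+1; None if there is none *)
Definition crystal_f (i : nat) (w : seq nat) : option (seq nat) :=
  let s := unbr_scan i w 0 in
  if has id s then Some (set_nth 0 w (size s - (find id (rev s)).+1) i.+1)
  else None.

(* the k-th occurrence (from the left) of letter x becomes
   #(letters < x) + k *)
Definition std (w : seq nat) : seq nat :=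
  [seq count (fun y => y < nth 0 w p) w
       + count (pred1 (nth 0 w p)) (take p w) + 1 | p <- iota 0 (size w)].

Definition collapse (i m : nat) (x : nat) : nat :=
  if (i <= x) && (x <= i + m) then i
  else if (i + m < x) && (x <= i + 2 * m) then i.+1
  else x.

Definition skeleton_edge (N : nat) (pi : seq nat) (i m : nat) (pi' : seq nat)
  : Prop :=
  dyck_interval N pi i m /\
  exists w', crystal_f i (map (collapse i m) pi) = Some w' /\ pi' = std w'.

(* Main.v *)
Require Import Defs.
From mathcomp Require Import all_boot zify.
From Stdlib Require Import Relations.
Set Implicit Arguments. Unset Strict Implicit. Unset Printing Implicit Defensive.

Lemma row_bump_none r x : all (fun y => y <= x) r -> row_bump r x = (None, rcons r x).
Proof.
elim: r => //= y r IH /andP[yx /IH ->]; by rewrite ltnNge yx.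
Qed.

Lemma row_bump_some p u q x : all (fun y => y <= x) p -> x < u ->
  row_bump (p ++ u :: q) x = (Some u, p ++ x :: q).
Proof.
move=> + xu; elim: p => /= [|y p IH]; first by rewrite xu.
by case/andP=> yx /IH ->; rewrite ltnNge yx.
Qed.

Lemma row_bump_mem r x : x \in (row_bump r x).2 /\
  forall e, e \in r -> e \in (row_bump r x).2 \/ (row_bump r x).1 = Some e.
Proof.
elim: r => /= [|y r [IH1 IH2]]; first by split => //; rewrite inE eqxx.
case: ifP => xy /=.
  split; first by rewrite inE eqxx.
  move=> e; rewrite inE => /orP[/eqP->|er]; first by right.
  by left; rewrite inE er orbT.
case: (row_bump r x) IH1 IH2 => b r' /= IH1 IH2; split; first by rewrite inE IH1 orbT.
move=> e; rewrite inE => /orP[/eqP->|/IH2 [] ]; first by left; rewrite inE eqxx.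
  by move=> H; left; rewrite inE H orbT.
by right.
Qed.

Lemma row_bump_some_gt r x z r' : row_bump r x = (Some z, r') ->
  x < z /\ (sorted leq r -> forall e, e \in r -> x < e -> z <= e).
Proof.
elim: r r' => //= y r IH r'.
case: ifP => xy.
  case=> <- _; split => // sr e; rewrite inE => /orP[/eqP->//|er] _.
  by move: sr => /(order_path_min leq_trans) /allP/(_ _ er).
case E: (row_bump r x) => [b r''] [Eb Er]; subst b.
have [xz H] := IH _ E; split => // sr e; rewrite inE => /orP[/eqP->|er xe].
  by rewrite xy.
by apply: H => //; move: sr => /= /path_sorted.
Qed.

Lemma row_bump_has r x e : e \in r -> x < e -> exists z, (row_bump r x).1 = Some z.
Proof.
elim: r => //= y r IH; rewrite inE; case: ifP => xy; first by exists y.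
case/orP=> [/eqP-> xe|er xe]; first by rewrite xe in xy.
by case: (row_bump r x) (IH er xe).
Qed.

Lemma row_bumpP r x : (all (fun y => y <= x) r /\ row_bump r x = (None, rcons r x)) \/
  exists p u q, [/\ r = p ++ u :: q, all (fun y => y <= x) p, x < u &
                    row_bump r x = (Some u, p ++ x :: q)].
Proof.
elim: r => /= [|y r IH]; first by left.
case: ifP => xy.
  by right; exists [::], y, r.
case: IH => [[H ->]|[p [u [q [-> H1 H2 ->]]]]].
  by left; rewrite H leqNgt xy.
right; exists (y :: p), u, q; split => //=; by rewrite H1 leqNgt xy.
Qed.

Lemma row_bump_sorted r x : sorted leq r -> sorted leq (row_bump r x).2.
Proof.
case: (row_bumpP r x) => [[H ->]|[p [u [q [-> H1 H2 ->]]]]] /=.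
  rewrite -cats1 !(sorted_pairwise leq_trans) pairwise_cat => ->.
  by rewrite /= andbT allrel1r H.
rewrite !(sorted_pairwise leq_trans) !pairwise_cat /= => /and3P[a1 a2 /andP[a3 a4]].
rewrite a2 a4 !andbT; apply/andP; split.
  rewrite allrel_consr H1 /=. move: a1; by rewrite allrel_consr => /andP[].
apply/allP=> e eq; apply: leq_trans (ltnW H2) _; exact: (allP a3).
Qed.

Notation row t r := (nth [::] t r).

Lemma tab_insert_cons r t x : tab_insert (r :: t) x =
  (row_bump r x).2 :: (if (row_bump r x).1 is Some y then tab_insert t y else t).
Proof. by rewrite /=; case: (row_bump r x) => [[y|] r']. Qed.

Lemma tab_head t x : x \in row (tab_insert t x) 0.
Proof.
case: t => [|r t]; first by rewrite /= inE.
by rewrite tab_insert_cons /=; case: (row_bump_mem r x).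
Qed.

Lemma tab_persist t x r e : e \in row t r ->
  exists2 r', r <= r' & e \in row (tab_insert t x) r'.
Proof.
elim: t x r => [|r0 t IH] x r; first by rewrite nth_nil.
rewrite tab_insert_cons; case: r => [|r] /=.
  have [_ H] := row_bump_mem r0 x; case/H => [er|->].
    by exists 0.
  by exists 1 => //=; exact: tab_head.
case: (row_bump r0 x).1 => [y|] H; last by exists r.+1.
by have [r' rr' er'] := IH y r H; exists r'.+1.
Qed.

Lemma tab_sorted t x : all (sorted leq) t -> all (sorted leq) (tab_insert t x).
Proof.
elim: t x => [|r0 t IH] x; first by [].
rewrite tab_insert_cons /= => /andP[s0 st]; rewrite row_bump_sorted //=.
by case: (row_bump r0 x).1 => [y|] //; apply: IH.
Qed.

Lemma tab_Z t j q y : y \in row t q -> j < y ->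
  exists z r, [/\ 0 < r, j < z, z \in row (tab_insert t j) r &
                  (sorted leq (row t 0) -> z <= y)].
Proof.
case: t => [|r0 t]; first by rewrite nth_nil.
rewrite tab_insert_cons; case: q => [|q] /= yq jy.
  have [z Ez] := row_bump_has yq jy.
  have [jz H] : j < z /\ (sorted leq r0 -> forall e, e \in r0 -> j < e -> z <= e).
    by apply: (row_bump_some_gt (r' := (row_bump r0 j).2)); rewrite -Ez -surjective_pairing.
  exists z, 1; split => //=; last by move=> s; apply: H.
  by rewrite Ez; apply: tab_head.
case: (row_bump r0 j).1 => [y'|].
  have [r' qr' yr'] := tab_persist y' yq.
  by exists y, r'.+1; split.
by exists y, q.+1; split.
Qed.

Definition Inv j t := exists r1 r2 y,
  [/\ r1 < r2, j \in row t r1, y \in row t r2 & j < y].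

Lemma tab_inv t x j : Inv j t -> Inv j (tab_insert t x).
Proof.
elim: t x => [|r0 t IH] x; first by case=> r1 [r2 [y [_ ]]]; rewrite nth_nil.
case=> [[|r1] [[|r2] [y [// lt12 jr yr jy]]]]; rewrite /= in jr yr.
  rewrite tab_insert_cons.
  have [_ H] := row_bump_mem r0 x; case/H: jr => [jr|Ej].
    case: (row_bump r0 x).1 => [z|].
      have [r' rr' yr'] := tab_persist z yr.
      by exists 0, r'.+1, y; split.
    by exists 0, r2.+1, y; split.
  rewrite Ej.
  have [z [r [r0p jz zr _]]] := tab_Z yr jy.
  by exists 1, r.+1, z; split => //=; apply: tab_head.
rewrite tab_insert_cons.
case: (row_bump r0 x).1 => [z|].
  have [r1' [r2' [y' [l1 l2 l3 l4]]]] := IH z (ex_intro _ r1 (ex_intro _ r2 (ex_intro _ y (And4 (lt12 : r1 < r2) jr yr jy)))).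
  by exists r1'.+1, r2'.+1, y'; split.
by exists r1.+1, r2.+1, y; split.
Qed.

Lemma foldl_persist t w r e : e \in row t r ->
  exists2 r', r <= r' & e \in row (foldl tab_insert t w) r'.
Proof.
elim: w t r => [|x w IH] t r H /=; first by exists r.
have [r' rr' H'] := tab_persist x H; have [r'' r'r'' H''] := IH _ _ H'.
by exists r'' => //; apply: leq_trans r'r''.
Qed.

Lemma foldl_inv t w j : Inv j t -> Inv j (foldl tab_insert t w).
Proof. by elim: w t => //= x w IH t H; apply/IH/tab_inv. Qed.

Lemma foldl_sorted t w : all (sorted leq) t -> all (sorted leq) (foldl tab_insert t w).
Proof. by elim: w t => //= x w IH t H; apply/IH/tab_sorted. Qed.

Lemma P_mem u e : e \in u -> exists r, e \in row (RSK_P u) r.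
Proof.
rewrite /RSK_P; elim/last_ind: u => // u x IH.
rewrite mem_rcons inE foldl_rcons => /orP[/eqP->|/IH [r H]].
  by exists 0; apply: tab_head.
by have [r' _ H'] := tab_persist x H; exists r'.
Qed.

Lemma P_sorted u : all (sorted leq) (RSK_P u).
Proof. exact: foldl_sorted. Qed.

Lemma inversion u j v k R0 R1 : RSK_P (u ++ j :: v) = [:: R0; R1] ->
  k \in u -> j < k -> j \in R0 /\ exists2 z, z <= k & z \in R1.
Proof.
move=> EP ku jk.
have [q kq] := P_mem ku.
have [z [r [r0 jz zr zk]]] := tab_Z kq jk.
have zk' : z <= k by apply: zk; have := P_sorted u; case: (RSK_P u) => //= r1 t /andP[].
have EP' : foldl tab_insert (tab_insert (RSK_P u) j) v = [:: R0; R1].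
  by rewrite -EP /RSK_P foldl_cat.
split.
  have : Inv j (tab_insert (RSK_P u) j) by exists 0, r, z; split => //; apply: tab_head.
  move/(foldl_inv v); rewrite EP' => -[r1 [r2 [y [l1 l2 l3 _]]]].
  case: r2 l1 l3 => [|[|r2]] //=; last by case: r2.
  by case: r1 l2.
have [r' rr' zr'] := foldl_persist v zr; rewrite EP' in zr'.
exists z => //; case: r' rr' zr' => [|[|r']] //=.
  by move=> /(leq_trans r0).
by rewrite nth_nil.
Qed.

Definition stp i o x := if x == i.+1 then o.+1 else if x == i then o.-1 else o.
Definition st i w o := foldl (stp i) o w.

Lemma scan_cat i x z o : unbr_scan i (x ++ z) o = unbr_scan i x o ++ unbr_scan i z (st i x o).
Proof.
elim: x o => //= y x IH o; rewrite /stp.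
case: ifP => _; first by rewrite IH.
case: ifP => _; last by rewrite IH.
by case: o => [|o]; rewrite IH.
Qed.

Lemma size_scan i w o : size (unbr_scan i w o) = size w.
Proof.
elim: w o => //= y w IH o; case: (y == i.+1) => /=; first by rewrite IH.
case: (y == i); last by rewrite /= IH.
by case: o => [|o] /=; rewrite IH.
Qed.

Definition lastT (s : seq bool) := size s - (find id (rev s)).+1.

Lemma lastT_cat s1 s2 : lastT (s1 ++ s2) = if has id s2 then size s1 + lastT s2 else lastT s1.
Proof.
rewrite /lastT rev_cat find_cat has_rev size_cat size_rev.
case: ifP => h; last by lia.
have := h; rewrite -has_rev has_find size_rev; lia.
Qed.

Lemma lastT_lt s : has id s -> lastT s < size s.
Proof. rewrite /lastT -has_rev has_find size_rev; lia. Qed.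

Lemma crystal_fE i w : crystal_f i w = if has id (unbr_scan i w 0)
   then Some (set_nth 0 w (lastT (unbr_scan i w 0)) i.+1) else None.
Proof. by []. Qed.

Lemma set_nth_catl (s1 s2 : seq nat) n y : n < size s1 ->
  set_nth 0 (s1 ++ s2) n y = set_nth 0 s1 n y ++ s2.
Proof. by elim: s1 n => //= x s1 IH [|n] //= h; rewrite IH. Qed.

Lemma set_nth_catr (s1 s2 : seq nat) n y :
  set_nth 0 (s1 ++ s2) (size s1 + n) y = s1 ++ set_nth 0 s2 n y.
Proof. by elim: s1 => //= x s1 IH; rewrite IH. Qed.

Definition tstep (t t' : seq nat) := exists a b c,
  (a <= b < c /\ t = [:: a; c; b] /\ t' = [:: c; a; b]) \/
  (a < b <= c /\ t = [:: b; a; c] /\ t' = [:: b; c; a]).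

Lemma knuth_stepE u v : knuth_step u v <->
  exists x y t t', [/\ tstep t t', u = x ++ t ++ y & v = x ++ t' ++ y].
Proof.
split.
  case=> x [y [a [b [c [[h [-> ->]]|[h [-> ->]]]]]]].
    by exists x, y, [:: a; c; b], [:: c; a; b]; split => //; exists a, b, c; left.
  by exists x, y, [:: b; a; c], [:: b; c; a]; split => //; exists a, b, c; right.
case=> x [y [t [t' [[a [b [c [[h [-> ->]]|[h [-> ->]]]]]] -> ->]]]].
  by exists x, y, a, b, c; left.
by exists x, y, a, b, c; right.
Qed.

Definition tstepb (t t' : seq nat) := match t, t' with
  | [:: a1; a2; a3], [:: b1; b2; b3] =>
     ((a1 <= a3 < a2) && (b1 == a2) && (b2 == a1) && (b3 == a3)) ||
     ((a2 < a1 <= a3) && (b1 == a1) && (b2 == a3) && (b3 == a2))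
  | _, _ => false end.

Lemma tstepbP t t' : tstepb t t' -> tstep t t'.
Proof.
case: t => [|a1 [|a2 [|a3 [|]]]] //; case: t' => [|b1 [|b2 [|b3 [|]]]] //=.
case/orP=> /andP[/andP[/andP[h /eqP->] /eqP->] /eqP->].
  by exists a1, a3, a2; left.
by exists a2, a1, a3; right.
Qed.

Definition lf i t o := set_nth 0 t (lastT (unbr_scan i t o)) i.+1.
Definition rel3 t t' := t = t' \/ tstep t t' \/ tstep t' t.

Lemma rel3b t t' : (t == t') || tstepb t t' || tstepb t' t -> rel3 t t'.
Proof.
case/orP=> [/orP[/eqP->|/tstepbP h]|/tstepbP h]; rewrite /rel3; tauto.
Qed.

Lemma nSn1 i : (i.+1 == i) = false. Proof. by elim: i. Qed.
Lemma nSn2 i : (i == i.+1) = false. Proof. by elim: i. Qed.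

Ltac cat3 x i := let H1 := fresh "H" in let H2 := fresh "H" in
  have [E1|H1] := eqVneq x i; [subst x|have [E2|H2] := eqVneq x i.+1; [subst x|]].

Ltac rwneq := repeat match goal with
  H : is_true (?x != ?y) |- _ =>
    try rewrite (negbTE H); try rewrite eq_sym (negbTE H);
    let H' := fresh "N" in (have H' : x <> y by apply/eqP); clear H
  end.

Ltac fin i a b c o := cat3 a i; cat3 b i; cat3 c i; destruct o as [|[|[|o]]];
  rewrite /= ?eqxx ?nSn1 ?nSn2; rwneq; rewrite /= ?eqxx ?nSn1 ?nSn2 //=; try lia.

Lemma LT1 i a b c o : a <= b < c ->
   [/\ st i [:: a; c; b] o = st i [:: c; a; b] o,
       has id (unbr_scan i [:: a; c; b] o) = has id (unbr_scan i [:: c; a; b] o) &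
       (has id (unbr_scan i [:: a; c; b] o) -> rel3 (lf i [:: a; c; b] o) (lf i [:: c; a; b] o))].
Proof.
move=> h; split.
- rewrite /st /= /stp. fin i a b c o.
- fin i a b c o.
- move=> hh; apply: rel3b; move: hh; rewrite /lf /lastT. fin i a b c o.
Qed.

Lemma LT2 i a b c o : a < b <= c ->
   [/\ st i [:: b; a; c] o = st i [:: b; c; a] o,
       has id (unbr_scan i [:: b; a; c] o) = has id (unbr_scan i [:: b; c; a] o) &
       (has id (unbr_scan i [:: b; a; c] o) -> rel3 (lf i [:: b; a; c] o) (lf i [:: b; c; a] o))].
Proof.
move=> h; split.
- rewrite /st /= /stp. fin i a b c o.
- fin i a b c o.
- move=> hh; apply: rel3b; move: hh; rewrite /lf /lastT. fin i a b c o.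
Qed.


Definition tsym t t' := tstep t t' \/ tstep t' t.
Definition relw (u v : seq nat) := u = v \/ knuth_step u v \/ knuth_step v u.

Lemma rel3_sym t t' : rel3 t t' -> rel3 t' t.
Proof. rewrite /rel3; intuition. Qed.

Lemma LTs i t t' o : tsym t t' ->
   [/\ st i t o = st i t' o, size t = size t',
       has id (unbr_scan i t o) = has id (unbr_scan i t' o) &
       (has id (unbr_scan i t o) -> rel3 (lf i t o) (lf i t' o))].
Proof.
case=> [[a [b [c [[h [-> ->]]|[h [-> ->]]]]]]|[a [b [c [[h [-> ->]]|[h [-> ->]]]]]]].
- by case: (LT1 i o h).
- by case: (LT2 i o h).
- case: (LT1 i o h) => h1 h2 h3; split => // hh; apply: rel3_sym; apply: h3; by rewrite h2.
- case: (LT2 i o h) => h1 h2 h3; split => // hh; apply: rel3_sym; apply: h3; by rewrite h2.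
Qed.

Lemma ctx_tsym x y t t' : tsym t t' -> relw (x ++ t ++ y) (x ++ t' ++ y).
Proof.
case=> h; right; [left|right]; apply/knuth_stepE.
  by exists x, y, t, t'.
by exists x, y, t', t.
Qed.

Lemma ctx_rel3 x y t t' : rel3 t t' -> relw (x ++ t ++ y) (x ++ t' ++ y).
Proof.
case=> [->|h]; first by left.
apply: ctx_tsym; rewrite /tsym; tauto.
Qed.

Lemma F_step i x y t t' u' : tsym t t' -> crystal_f i (x ++ t ++ y) = Some u' ->
  exists v', crystal_f i (x ++ t' ++ y) = Some v' /\ relw u' v'.
Proof.
move=> ts; rewrite !crystal_fE !scan_cat.
set o1 := st i x 0.
have [e1 e2 e3 e4] := LTs i o1 ts.
rewrite e1.
set sy := unbr_scan i y _.
rewrite !has_cat !lastT_cat !size_scan.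
case hy: (has id sy) => /=.
  rewrite !has_cat hy !orbT => -[<-]; rewrite e2 !set_nth_catr -e2 !set_nth_catr.
  eexists; split; first by reflexivity.
  exact: ctx_tsym.
rewrite !has_cat hy !orbF -e3.
case ht: (has id (unbr_scan i t o1)) => /=.
  rewrite orbT => -[<-]; eexists; split; first by reflexivity.
  rewrite !set_nth_catr !set_nth_catl; try by rewrite -(size_scan i _ o1); apply: lastT_lt; rewrite // -e3.
  exact: ctx_rel3 (e4 ht).
rewrite orbF; case hx: (has id _) => //= -[<-].
eexists; split; first by reflexivity.
have lx : lastT (unbr_scan i x 0) < size x by rewrite -(size_scan i x 0) lastT_lt.
rewrite !set_nth_catl // ?size_cat; try lia.
by apply: ctx_tsym.
Qed.

Definition Sv (w : seq nat) p := count (fun y => y < nth 0 w p) w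
   + count (pred1 (nth 0 w p)) (take p w) + 1.

Lemma stdE w : std w = map (Sv w) (iota 0 (size w)).
Proof. by []. Qed.

Lemma nth_mid (x z : seq nat) k : nth 0 (x ++ z) (size x + k) = nth 0 z k.
Proof. by rewrite nth_cat ltnNge leq_addr /= addKn. Qed.

Lemma take_mid (x z : seq nat) k : take (size x + k) (x ++ z) = x ++ take k z.
Proof.
rewrite take_cat ltnNge leq_addr /= addKn.
by [].
Qed.

Lemma cnt_lt (s : seq nat) a b : a < b ->
  count (fun y => y < a) s + count (pred1 a) s <= count (fun y => y < b) s.
Proof.
elim: s => //= y s IH ab; have := IH ab.
case: (ltngtP y a) => [ya|ay|->]; rewrite /= ?eqxx.
- have yb : y < b by lia. rewrite yb; lia.
- case: (y < b); lia.
- case: (a < b) ab => //; lia.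
Qed.

Lemma std_split (x t t' y : seq nat) : perm_eq t t' ->
  exists sx sy,
   std (x ++ t ++ y) = sx ++ map (Sv (x ++ t ++ y)) (iota (size x) (size t)) ++ sy /\
   std (x ++ t' ++ y) = sx ++ map (Sv (x ++ t' ++ y)) (iota (size x) (size t')) ++ sy.
Proof.
move=> pt; have st' : size t = size t' by apply: perm_size.
have pu : perm_eq (x ++ t ++ y) (x ++ t' ++ y) by rewrite perm_cat2l perm_cat2r.
have cnt : forall P, count P (x ++ t ++ y) = count P (x ++ t' ++ y) by move=> P; apply/permP.
have cntt : forall P, count P t = count P t' by move=> P; apply/permP.
exists (map (Sv (x ++ t ++ y)) (iota 0 (size x))),
       (map (Sv (x ++ t ++ y)) (iota (size x + size t) (size y))).
rewrite !stdE !size_cat !iotaD !map_cat add0n.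
split => //; rewrite -st'; congr (_ ++ _ ++ _).
  apply/eq_in_map => p; rewrite mem_iota add0n => /andP[_ px].
  by rewrite /Sv !nth_cat px !take_cat px cnt.
apply/eq_in_map => p; rewrite mem_iota => /andP[h1 _].
have H : forall k, Sv (x ++ t' ++ y) (size x + size t' + k) = Sv (x ++ t ++ y) (size x + size t + k).
  move=> k; rewrite /Sv -!addnA (nth_mid x (t' ++ y)) (nth_mid x (t ++ y)) (take_mid x (t' ++ y)) (take_mid x (t ++ y)).
  rewrite (nth_mid t' y) (nth_mid t y) (take_mid t' y) (take_mid t y) cnt !count_cat cntt.
  by [].
by rewrite -(subnKC h1) -H st'.
Qed.

Lemma Sv_mid (x z : seq nat) k : Sv (x ++ z) (size x + k) =
  count (fun y => y < nth 0 z k) (x ++ z) + count (pred1 (nth 0 z k)) x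
  + count (pred1 (nth 0 z k)) (take k z) + 1.
Proof. rewrite /Sv nth_mid take_mid !count_cat; lia. Qed.

Lemma iota3 n : iota n 3 = [:: n + 0; n + 1; n + 2].
Proof. by rewrite addn0 addn1 addn2. Qed.

Ltac genlia a b c x w :=
  try set A1 := count (fun y => y < a) w;
  try set A2 := count (fun y => y < b) w;
  try set A3 := count (fun y => y < c) w;
  try set A4 := count_mem a w;
  try set A5 := count_mem b w;
  try set A6 := count_mem c w;
  try set A7 := count_mem a x;
  try set A8 := count_mem b x;
  try set A9 := count_mem c x;
  lia.

Lemma kstep1 sx sy A B C A' B' C' : A <= B -> B < C -> A' = A -> B' = B -> C' = C ->
  knuth_step (sx ++ [:: A; C; B] ++ sy) (sx ++ [:: C'; A'; B'] ++ sy).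
Proof. by move=> h1 h2 -> -> ->; exists sx, sy, A, B, C; left; rewrite h1 h2. Qed.

Lemma kstep2 sx sy A B C A' B' C' : A < B -> B <= C -> A' = A -> B' = B -> C' = C ->
  knuth_step (sx ++ [:: B; A; C] ++ sy) (sx ++ [:: B'; C'; A'] ++ sy).
Proof. by move=> h1 h2 -> -> ->; exists sx, sy, A, B, C; right; rewrite h1 h2. Qed.

Lemma std_step u v : knuth_step u v -> knuth_step (std u) (std v).
Proof.
case/knuth_stepE => x [y [t [t' [[a [b [c [[h [-> ->]]|[h [-> ->]]]]]] -> ->]]]].
- have pt : perm_eq [:: a; c; b] [:: c; a; b] by apply/permP => P /=; rewrite addnCA.
  have [sx [sy [-> ->]]] := std_split x y pt.
  have cnt : forall P, count P (x ++ [:: a; c; b] ++ y) = count P (x ++ [:: c; a; b] ++ y).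
    by move=> P; apply/permP; rewrite perm_cat2l perm_cat2r.
  have -> : size [:: a; c; b] = 3 by []. have -> : size [:: c; a; b] = 3 by [].
  rewrite !iota3 /= !Sv_mid /= -!cnt.
  set w := x ++ _.
  have ca : (c == a) = false by apply/eqP; lia.
  have ac : (a == c) = false by apply/eqP; lia.
  have cb : (c == b) = false by apply/eqP; lia.
  rewrite ca ac cb.
  have cau : count (pred1 a) w >= count (pred1 a) x + 1 by rewrite /w !count_cat /= eqxx; lia.
  have h2 : count (fun y => y < b) w + count (pred1 b) w <= count (fun y => y < c) w by apply: cnt_lt; lia.
  case: (eqVneq a b) => [eab|ab].
    subst b.
    have cbu : count (pred1 a) w >= count (pred1 a) x + 2 by rewrite /w !count_cat /= eqxx ca; lia.
    clearbody w; apply: kstep1; rewrite /=; move: h2 cbu cau; try move: h1; (genlia a b c x w || genlia a a c x w).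
  have cbu : count (pred1 b) w >= count (pred1 b) x + 1 by rewrite /w !count_cat /= eqxx cb (negbTE ab); lia.
  have h1 : count (fun y => y < a) w + count (pred1 a) w <= count (fun y => y < b) w by apply: cnt_lt; lia.
  clearbody w; apply: kstep1; rewrite /=; move: h2 cbu cau; try move: h1; (genlia a b c x w || genlia a a c x w).
- have pt : perm_eq [:: b; a; c] [:: b; c; a] by rewrite perm_cons; apply/permP => P /=; rewrite !addn0 addnC.
  have [sx [sy [-> ->]]] := std_split x y pt.
  have cnt : forall P, count P (x ++ [:: b; a; c] ++ y) = count P (x ++ [:: b; c; a] ++ y).
    by move=> P; apply/permP; rewrite perm_cat2l perm_cat2r.
  have -> : size [:: b; a; c] = 3 by []. have -> : size [:: b; c; a] = 3 by [].
  rewrite !iota3 /= !Sv_mid /= -!cnt.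
  set w := x ++ _.
  have ca : (c == a) = false by apply/eqP; lia.
  have ac : (a == c) = false by apply/eqP; lia.
  have ba : (b == a) = false by apply/eqP; lia.
  rewrite ca ac ba.
  have cau : count (pred1 a) w >= count (pred1 a) x + 1 by rewrite /w !count_cat /= eqxx ba; lia.
  have h1 : count (fun y => y < a) w + count (pred1 a) w <= count (fun y => y < b) w by apply: cnt_lt; lia.
  case: (eqVneq b c) => [ebc|bc].
    subst c.
    have cbu : count (pred1 b) w >= count (pred1 b) x + 2 by rewrite /w !count_cat /= eqxx ac; lia.
    clearbody w; apply: kstep2; rewrite /=; move: h1 cbu cau; try move: h2; (genlia a b c x w || genlia a b b x w).
  have cbu : count (pred1 b) w >= count (pred1 b) x + 1 by rewrite /w !count_cat /= eqxx; lia.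
  have h2 : count (fun y => y < b) w + count (pred1 b) w <= count (fun y => y < c) w by apply: cnt_lt; lia.
  clearbody w; apply: kstep2; rewrite /=; move: h1 cbu cau; try move: h2; (genlia a b c x w || genlia a b b x w).
Qed.

Definition inB i m x := (i <= x) && (x <= i + m).
Definition inT i m x := (i + m < x) && (x <= i + 2 * m).
Definition incB i m (pi : seq nat) := sorted ltn (filter (inB i m) pi).
Definition incT i m (pi : seq nat) := sorted ltn (filter (inT i m) pi).
Definition bal i m (pi : seq nat) := st i (map (collapse i m) pi) 0 = 0.

Lemma sorted_mid (x t y : seq nat) : sorted ltn (x ++ t ++ y) -> sorted ltn t.
Proof.
by rewrite !(sorted_pairwise ltn_trans) !pairwise_cat => /and3P[_ _ /and3P[_ ->]].
Qed.

Lemma sorted_filter_mid (P : pred nat) x t y :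
  sorted ltn (filter P (x ++ t ++ y)) -> sorted ltn (filter P t).
Proof. by rewrite !filter_cat => /sorted_mid. Qed.

Lemma no_desc (P : pred nat) x y a c b :
  sorted ltn (filter P (x ++ [:: a; c; b] ++ y)) -> P c -> P b -> c < b.
Proof.
move/sorted_filter_mid => /= + Pc Pb; rewrite Pc Pb.
by case: (P a) => /=; rewrite ?andbT //; case/andP.
Qed.

Lemma no_desc2 (P : pred nat) x y a c b :
  sorted ltn (filter P (x ++ [:: c; a; b] ++ y)) -> P c -> P a -> c < a.
Proof.
move/sorted_filter_mid => /= + Pc Pa; rewrite Pc Pa.
by case: (P b) => /=; rewrite ?andbT //; case/andP.
Qed.

Definition convex (P : pred nat) := forall a b c, a <= b <= c -> P a -> P c -> P b.

Lemma inB_convex i m : convex (inB i m).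
Proof. move=> a b c; rewrite /inB; lia. Qed.
Lemma inT_convex i m : convex (inT i m).
Proof. move=> a b c; rewrite /inT; lia. Qed.

Lemma filter_step P u v : convex P -> knuth_step u v ->
  sorted ltn (filter P u) \/ sorted ltn (filter P v) -> filter P u = filter P v.
Proof.
move=> cP [x [y [a [b [c [[h [-> ->]]|[h [-> ->]]]]]]]] hs.
- rewrite !filter_cat; congr (_ ++ _ ++ _) => /=.
  case Pa: (P a); case Pc: (P c) => //=.
  have Pb : P b by apply: (cP a b c) => //; lia.
  rewrite Pb; exfalso; case: hs => hs.
    by have := no_desc hs Pc Pb; lia.
  by have := no_desc2 hs Pc Pa; lia.
- rewrite !filter_cat; congr (_ ++ _ ++ _) => /=.
  case Pa: (P a); case Pc: (P c); case Pb: (P b) => //=.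
  + exfalso; case: hs => hs.
      by have := no_desc2 (a := a) (b := c) (c := b) hs Pb Pa; lia.
    by have := no_desc (a := b) (c := c) (b := a) hs Pc Pa; lia.
  + by have := cP a b c (_ : a <= b <= c) Pa Pc; rewrite Pb; lia.
Qed.

Lemma collapse_mono i m x y : x <= y -> collapse i m x <= collapse i m y.
Proof. rewrite /collapse; repeat (case: ifP => ?); lia. Qed.

Lemma collapse_eq i m b c : b < c -> collapse i m b = collapse i m c ->
  (inB i m b && inB i m c) || (inT i m b && inT i m c).
Proof. rewrite /collapse /inB /inT; repeat (case: ifP => ?); lia. Qed.

Lemma collapse_step i m u v : knuth_step u v -> incB i m u -> incT i m u ->
  knuth_step (map (collapse i m) u) (map (collapse i m) v).
Proof.
move=> [x [y [a [b [c [[h [-> ->]]|[h [-> ->]]]]]]]] hB hT; rewrite !map_cat /=.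
- exists (map (collapse i m) x), (map (collapse i m) y), (collapse i m a), (collapse i m b), (collapse i m c).
  left; split => //.
  have h1 : collapse i m a <= collapse i m b by apply: collapse_mono; lia.
  have h2 : collapse i m b <= collapse i m c by apply: collapse_mono; lia.
  rewrite h1 /= ltn_neqAle h2 andbT; apply/eqP => E.
  have bc : b < c by lia.
  case/orP: (collapse_eq bc E) => /andP[Pb Pc].
    by have := no_desc hB Pc Pb; lia.
  by have := no_desc hT Pc Pb; lia.
- exists (map (collapse i m) x), (map (collapse i m) y), (collapse i m a), (collapse i m b), (collapse i m c).
  right; split => //.
  have h1 : collapse i m a <= collapse i m b by apply: collapse_mono; lia.
  have h2 : collapse i m b <= collapse i m c by apply: collapse_mono; lia.
  rewrite h2 andbT ltn_neqAle h1 andbT; apply/eqP => E.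
  have ab : a < b by lia.
  case/orP: (collapse_eq ab E) => /andP[Pa Pb].
    by have := no_desc2 (b := c) hB Pb Pa; lia.
  by have := no_desc2 (b := c) hT Pb Pa; lia.
Qed.

Lemma st_step i u v o : knuth_step u v -> st i u o = st i v o.
Proof.
case/knuth_stepE => x [y [t [t' [ts -> ->]]]].
rewrite /st !foldl_cat -/(st i x o) -!/(st i _ _).
have [e1 _ _ _] := LTs i (st i x o) (or_introl ts : tsym t t').
by rewrite /st in e1 *; rewrite e1.
Qed.

Lemma sorted_rconsP (s : seq nat) x : sorted ltn (rcons s x) ->
  sorted ltn s /\ all (fun y => y < x) s.
Proof.
rewrite -cats1 !(sorted_pairwise ltn_trans) pairwise_cat allrel1r.
by case/and3P.
Qed.

Definition tab2 (R0 R1 : seq nat) := [seq r <- [:: R0; R1] | r != [::]].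

Definition tab1 (R1 : seq nat) := if R1 is [::] then [::] else [:: R1].
Lemma tab2_cons R0 R1 : R0 != [::] -> tab2 R0 R1 = R0 :: tab1 R1.
Proof. by rewrite /tab2 /= => ->; case: R1. Qed.

Lemma all_leq_of_lt (s : seq nat) x : all (fun y => y < x) s -> all (fun y => y <= x) s.
Proof. by move/allP=> h; apply/allP => y /h /ltnW. Qed.

Lemma comp_tab i m w : 0 < m -> all (in_interval i m) w ->
  sorted ltn (filter (inB i m) w) -> sorted ltn (filter (inT i m) w) ->
  exists us ms, [/\ RSK_P w = tab2 (filter (inB i m) w ++ us) ms,
     filter (inT i m) w = ms ++ us, size us = st i (map (collapse i m) w) 0 &
     (ms != [::] -> filter (inB i m) w != [::])].
Proof.
move=> m0; elim/last_ind: w => [|w x IH]; first by exists [::], [::].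
rewrite all_rcons => /andP[xI aw].
rewrite !filter_rcons /RSK_P foldl_rcons -/(RSK_P w) map_rcons /st foldl_rcons -/(st i _ 0).
have cx : collapse i m x = if inB i m x then i else i.+1.
  by move: xI; rewrite /collapse /inB /in_interval; repeat (case: ifP => ?); lia.
rewrite cx.
case xB: (inB i m x).
- have xT : inT i m x = false by move: xB; rewrite /inB /inT; lia.
  rewrite xT => /sorted_rconsP [sB allB] sT.
  have [us [ms [EP ET Es Em]]] := IH aw sB sT.
  rewrite /stp eqxx nSn2 -Es.
  have xlt : forall y, y \in filter (inT i m) w -> x < y.
    move=> y; rewrite mem_filter /inT => /andP[+ _]; move: xB; rewrite /inB; lia.
  case: us EP ET Es => [|u us] EP ET Es.
  + rewrite cats0 in EP ET.
    case fB: (filter (inB i m) w) EP Em => [|b0 fB'] EP Em.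
      have ms0 : ms = [::] by move: Em; case: (ms) => // ? ? /(_ isT).
      rewrite EP ms0 /=; exists [::], [::]; split => //.
      by rewrite ET ms0.
    rewrite EP tab2_cons // tab_insert_cons row_bump_none; last by rewrite -fB; apply: all_leq_of_lt.
    exists [::], ms; split => //=; rewrite ?cats0 //.
    by rewrite tab2_cons //; case: (ms).
  + have xu : x < u by apply: xlt; rewrite ET mem_cat inE eqxx orbT.
    have sT' : sorted ltn (ms ++ u :: us) by rewrite -ET.
    have msu : all (fun y => y <= u) ms.
      move: sT'; rewrite (sorted_pairwise ltn_trans) pairwise_cat allrel_consr => /and3P[/andP[h _] _ _].
      exact: all_leq_of_lt.
    rewrite EP tab2_cons ?tab_insert_cons ?row_bump_some //; first last.
    - by case: (filter _ _).
    - exact: all_leq_of_lt.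
    rewrite /=.
    exists us, (rcons ms u); split => //=.
    * rewrite tab2_cons; last by case: (filter _ _).
      case: (ms) msu => [|m1 ms'] msu; first by rewrite /= cat_rcons.
      by rewrite /tab1 tab_insert_cons row_bump_none //= cat_rcons.
    * by rewrite ET cat_rcons.
    * by case: (filter _ _).
- have xT : inT i m x by move: xB xI; rewrite /inB /inT /in_interval; lia.
  rewrite xT => sB /sorted_rconsP [sT allT].
  have [us [ms [EP ET Es Em]]] := IH aw sB sT.
  rewrite /stp eqxx -Es.
  have xgt : forall y, y \in filter (inB i m) w ++ us -> y <= x.
    move=> y; rewrite mem_cat => /orP[|yu].
      rewrite mem_filter /inB => /andP[+ _]; move: xT; rewrite /inT; lia.
    have : y \in filter (inT i m) w by rewrite ET mem_cat yu orbT.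
    by move/(allP allT)/ltnW.
  case R0: (filter (inB i m) w ++ us) EP xgt => [|r0 R0'] EP xgt.
    have fB0 : filter (inB i m) w = [::] by move: R0; case: (filter _ _).
    have us0 : us = [::] by move: R0; rewrite fB0.
    have ms0 : ms = [::] by move: Em; rewrite fB0; case: (ms) => // ? ? /(_ isT).
    rewrite EP ms0 /=; exists [:: x], [::]; split => //.
    + by rewrite fB0.
    + by rewrite ET ms0 us0.
    + by rewrite us0.
  rewrite EP tab2_cons // tab_insert_cons row_bump_none; last by apply/allP.
  exists (rcons us x), ms; split => //.
  + by rewrite -rcons_cat R0 tab2_cons.
  + by rewrite ET rcons_cat.
  + by rewrite size_rcons.
Qed.

Lemma st_restrict i m pi o : 0 < m ->
  st i (map (collapse i m) pi) o = st i (map (collapse i m) (restrict pi i m)) o.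
Proof.
move=> m0; elim: pi o => //= x pi IH o.
case xI: (in_interval i m x) => /=; rewrite IH //.
have -> : collapse i m x = x by move: xI; rewrite /collapse /in_interval; repeat (case: ifP => ?); lia.
rewrite /stp; have -> : (x == i.+1) = false by apply/eqP; move: xI; rewrite /in_interval; lia.
by have -> : (x == i) = false by apply/eqP; move: xI; rewrite /in_interval; lia.
Qed.

Lemma filter_restrict (P : pred nat) i m pi : (forall x, P x -> in_interval i m x) ->
  filter P (restrict pi i m) = filter P pi.
Proof.
move=> h; rewrite /restrict -filter_predI; apply: eq_filter => x /=.
by case Px: (P x) => //=; rewrite h.
Qed.

Lemma sorted_of_inv (P : pred nat) w :
  (forall u j v k, w = u ++ j :: v -> k \in u -> P k -> P j -> k < j) ->
  sorted ltn (filter P w).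
Proof.
rewrite (sorted_pairwise ltn_trans).
elim: w => //= x w IH H.
have H' : forall u j v k, w = u ++ j :: v -> k \in u -> P k -> P j -> k < j.
  move=> u j v k E ku; apply: (H (x :: u) j v k); [by rewrite E | by rewrite inE ku orbT].
case Px: (P x) => /=; last exact: IH.
rewrite IH // andbT; apply/allP => j; rewrite mem_filter => /andP[Pj jw].
have [u [v E]] : exists u v, w = u ++ j :: v by case/splitPr: jw => u v; exists u, v.
by apply: (H (x :: u) j v x); rewrite ?E ?mem_head.
Qed.

Lemma inB_I i m x : inB i m x -> in_interval i m x.
Proof. rewrite /inB /in_interval; lia. Qed.
Lemma inT_I i m x : inT i m x -> in_interval i m x.
Proof. rewrite /inT /in_interval; lia. Qed.

Lemma uniq_restrict N pi i m : is_perm N pi -> uniq (restrict pi i m).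
Proof. by move=> pP; rewrite filter_uniq // (perm_uniq pP) iota_uniq. Qed.

Lemma dyck_cond N pi i m : is_perm N pi -> dyck_interval N pi i m ->
  [/\ incB i m pi, incT i m pi & bal i m pi].
Proof.
move=> pP [m0 i1 iN EP].
have uw := uniq_restrict i m pP.
set w := restrict pi i m in EP uw.
have aw : all (in_interval i m) w by apply/allP => x; rewrite mem_filter => /andP[].
have inv : forall u j v k, w = u ++ j :: v -> k \in u -> j < k ->
    j \in iota i m.+1 /\ exists2 z, z <= k & z \in iota (i + m).+1 m.
  by move=> u j v k E; rewrite E in EP; exact: inversion EP.
have neq : forall u j v k, w = u ++ j :: v -> k \in u -> k != j.
  move=> u j v k E ku; apply/eqP => kj; move: uw; rewrite E cat_uniq => /and3P[_ /hasPn h _].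
  by have := h j (mem_head _ _); rewrite /= -kj ku.
have iB : incB i m pi.
  rewrite /incB -(filter_restrict _ (@inB_I i m)).
  apply: sorted_of_inv => u j v k E ku Pk Pj.
  case: (ltngtP k j) => // [jk|kj]; last by have := neq _ _ _ _ E ku; rewrite kj eqxx.
  have [_ [z zk]] := inv _ _ _ _ E ku jk.
  by rewrite mem_iota; move: Pk; rewrite /inB; lia.
have iT : incT i m pi.
  rewrite /incT -(filter_restrict _ (@inT_I i m)).
  apply: sorted_of_inv => u j v k E ku Pk Pj.
  case: (ltngtP k j) => // [jk|kj]; last by have := neq _ _ _ _ E ku; rewrite kj eqxx.
  have [+ _] := inv _ _ _ _ E ku jk.
  by rewrite mem_iota; move: Pj; rewrite /inT; lia.
split => //.
have sB : sorted ltn (filter (inB i m) w) by rewrite /w filter_restrict //; apply: inB_I.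
have sT : sorted ltn (filter (inT i m) w) by rewrite /w filter_restrict //; apply: inT_I.
have [us [ms [EP' ET Es Em]]] := @comp_tab i m w m0 aw sB sT.
rewrite /bal st_restrict // -/w -Es.
case: us EP' ET {Es} => // u us EP' ET.
have uT : inT i m u.
  have : u \in filter (inT i m) w by rewrite ET mem_cat mem_head orbT.
  by rewrite mem_filter => /andP[].
move: EP'; rewrite EP tab2_cons; last by case: (filter _ _).
case=> E _; have : u \in filter (inB i m) w ++ u :: us by rewrite mem_cat mem_head orbT.
rewrite -E => H; have H2 : u \in iota i m.+1 := H.
by move: H2; rewrite mem_iota; move: uT; rewrite /inT; lia.
Qed.

Lemma cond_dyck N sigma i m : is_perm N sigma -> 0 < m -> 1 <= i -> i + 2 * m <= N ->
  incB i m sigma -> incT i m sigma -> bal i m sigma -> dyck_interval N sigma i m.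
Proof.
move=> pS m0 i1 iN iB iT bl; split => //.
set w := restrict sigma i m.
have aw : all (in_interval i m) w by apply/allP => x; rewrite mem_filter => /andP[].
have sB : sorted ltn (filter (inB i m) w) by rewrite /w filter_restrict //; apply: inB_I.
have sT : sorted ltn (filter (inT i m) w) by rewrite /w filter_restrict //; apply: inT_I.
have [us [ms [EP ET Es Em]]] := @comp_tab i m w m0 aw sB sT.
have us0 : us = [::] by apply/nilP; rewrite /nilp Es -st_restrict // bl.
rewrite us0 in EP ET; rewrite cats0 in EP; rewrite cats0 in ET.
have memS : forall x, (x \in w) = in_interval i m x.
  move=> x; rewrite /w mem_filter (perm_mem pS) mem_iota /in_interval.
  apply/idP/idP; lia.
have fB : filter (inB i m) w = iota i m.+1.
  apply: (irr_sorted_eq ltn_trans ltnn) => //; first exact: iota_ltn_sorted.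
  move=> x; rewrite mem_filter memS mem_iota /inB /in_interval; apply/idP/idP; lia.
have fT : ms = iota (i + m).+1 m.
  rewrite -ET; apply: (irr_sorted_eq ltn_trans ltnn) => //; first exact: iota_ltn_sorted.
  move=> x; rewrite mem_filter memS mem_iota /inT /in_interval; apply/idP/idP; lia.
rewrite EP fB fT tab2_cons //.
by case: m m0 {iB iT bl EP Es Em ET fT sB sT aw memS w fB iN} => // m _; rewrite /tab1.
Qed.

Lemma step_inc i m x y : (knuth_step x y \/ knuth_step y x) ->
  incB i m x -> incT i m x -> incB i m y /\ incT i m y.
Proof.
move=> hxy hB hT; split.
  case: hxy => h.
    by rewrite /incB -(filter_step (@inB_convex i m) h) //; left.
  by rewrite /incB (filter_step (@inB_convex i m) h) //; right.
case: hxy => h.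
  by rewrite /incT -(filter_step (@inT_convex i m) h) //; left.
by rewrite /incT (filter_step (@inT_convex i m) h) //; right.
Qed.

Lemma chain1 i m pi sigma : clos_refl_sym_trans_1n _ knuth_step pi sigma ->
  incB i m pi -> incT i m pi -> bal i m pi ->
  [/\ incB i m sigma, incT i m sigma & bal i m sigma].
Proof.
elim => [x|x y z hxy _ IH]; first by move=> *; split.
move=> hB hT hb; have [hB' hT'] := step_inc hxy hB hT.
apply: IH => //; rewrite /bal; apply: eq_trans hb.
case: hxy => h.
  by rewrite (st_step i 0 (collapse_step h hB hT)).
by rewrite (st_step i 0 (collapse_step h hB' hT')).
Qed.

Lemma chain2 i m pi sigma : clos_refl_sym_trans_1n _ knuth_step pi sigma ->
  incB i m pi -> incT i m pi -> forall a,
  crystal_f i (map (collapse i m) pi) = Some a ->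
  exists b, crystal_f i (map (collapse i m) sigma) = Some b /\ knuth_equiv (std a) (std b).
Proof.
elim => [x|x y z hxy _ IH] hB hT a Ea.
  by exists a; split => //; apply: rst_refl.
have [hB' hT'] := step_inc hxy hB hT.
have [a' [Ea' ra]] : exists a', crystal_f i (map (collapse i m) y) = Some a' /\ relw a a'.
  case: hxy => h.
    have := collapse_step h hB hT; case/knuth_stepE => x' [y' [t [t' [ts E1 E2]]]].
    rewrite E1 in Ea; rewrite E2; apply: F_step Ea; by left.
  have := collapse_step h hB' hT'; case/knuth_stepE => x' [y' [t [t' [ts E1 E2]]]].
  rewrite E2 in Ea; rewrite E1; apply: F_step Ea; by right.
have [b [Eb hb]] := IH hB' hT' a' Ea'.
exists b; split => //; apply: rst_trans hb.
case: ra => [->|[h|h]]; first exact: rst_refl.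
  by apply: rst_step; apply: std_step.
by apply: rst_sym; apply: rst_step; apply: std_step.
Qed.

Unset Implicit Arguments.
Theorem proposition4p5 (N : nat) (pi sigma : seq nat) (i m : nat) :
  is_perm N pi -> is_perm N sigma -> knuth_equiv pi sigma ->
  dyck_interval N pi i m ->
  dyck_interval N sigma i m /\
  (forall pi' sigma' : seq nat,
      skeleton_edge N pi i m pi' -> skeleton_edge N sigma i m sigma' ->
      knuth_equiv pi' sigma').
Proof.
move=> pP pS eq dP.
have [m0 i1 iN _] := dP.
have [hB hT hb] := dyck_cond pP dP.
have e1 := proj1 (clos_rst_rst1n_iff _ _ _ _) eq.
split.
  have [hB' hT' hb'] := chain1 e1 hB hT hb.
  exact: cond_dyck.
move=> pi' sigma' [_ [w' [Ew' ->]]] [_ [w'' [Ew'' ->]]].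
have [b [Eb hstd]] := chain2 e1 hB hT Ew'.
by rewrite Ew'' in Eb; case: Eb => ->.
Qed.
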